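(* Let $F=\{T_1,\dots,T_n\}$ be a finite family of reduction operators relative to a well-ordered set $(G,<)$ and let $\tilde F=\{\tilde T_1,\dots,\tilde T_n\}$ be the reduction of $F$. Then $\wedge\tilde F=\wedge F$ and $\mathrm{obs}(F)\subseteq\mathrm{obs}(\tilde F)$.
   Context: Let $\mathbb{K}$ be a field, $(G,<)$ a well-ordered set and $\mathbb{K}G$ the vector space with basis $G$. For $v\neq0$, $\mathrm{lt}(v)$ is the greatest element of $G$ appearing with nonzero coefficient in $v$. Extend $<$ to $\mathbb{K}G$: $u<v$ if $u=0$ and $v\neq0$, or if $\mathrm{lt}(u)<\mathrm{lt}(v)$; $u\le v$ means $u<v$ or $u=v$. A reduction operator is an idempotent linear endomorphism $T$ of $\mathbb{K}G$ with $T(g)\le g$ for all $g\in G$; $\mathrm{nf}(T)=\{g\in G\mid T(g)=g\}$, $\mathrm{red}(T)=G\setminus\mathrm{nf}(T)$. For every subspace $V$ there is a unique reduction operator $\ker^{-1}(V)$ with kernel $V$. For a set $F$ of reduction operators, $\wedge F=\ker^{-1}(\sum_{T\in F}\ker T)$, $\mathrm{nf}(F)=\bigcap_{T\in F}\mathrm{nf}(T)$ (which contains $\mathrm{nf}(\wedge F)$), and $\mathrm{obs}(F)=\mathrm{nf}(F)\setminus\mathrm{nf}(\wedge F)$. For $F=\{T_1,\dots,T_n\}$: $\mathbf{ker}(F)=\ker T_1\times\dots\times\ker T_n$, $\pi_F(v_1,\dots,v_n)=v_1+\dots+v_n$, $\mathrm{syz}(F)=\ker\pi_F$. For $g\in\mathrm{red}(T_i)$,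 $e_{i,g}$ is the tuple with $g-T_i(g)$ at position $i$ and $0$ elsewhere; these form a basis of $\mathbf{ker}(F)$, well-ordered by $e_{i,g}\sqsubset e_{i',g'}$ iff $i<i'$, or $i=i'$ and $g<g'$; $\mathrm{lt}(\mathrm{syz}(F))$ is the set of $\sqsubset$-greatest basis elements appearing in nonzero elements of $\mathrm{syz}(F)$. The reduction of $F$ is $\tilde F=\{\tilde T_1,\dots,\tilde T_n\}$ where $\tilde T_i$ is the linear map with $\tilde T_i(g)=g$ if $g\in\mathrm{red}(T_i)$ and $e_{i,g}\in\mathrm{lt}(\mathrm{syz}(F))$, and $\tilde T_i(g)=T_i(g)$ otherwise, for $g\in G$; each $\tilde T_i$ is a reduction operator. *)

(* Defs.v *)
(* with multinomials' monoid algebra {malg K[G]} as the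
   free K-vector space K G with basis G (basis vector g is << g >>). *)
From HB Require Import structures.
From mathcomp Require Import all_boot all_order all_algebra.
From mathcomp Require Import finmap.
From mathcomp.multinomials Require Import monalg.
From Stdlib Require Import ClassicalEpsilon.

Set Implicit Arguments.
Unset Strict Implicit.
Unset Printing Implicit Defensive.

Import Order.TTheory GRing.Theory.
Local Open Scope ring_scope.

Section ReductionOperators.
Variables (K : fieldType) (d : Order.disp_t) (G : orderType d).

Definition vec := {malg K[G]}.

(* lt(v): the greatest element of G with nonzero coefficient in v;
   None exactly when v = 0 *)
Definition ltm (v : vec) : option G :=
  foldr (fun x acc => Some (match acc with
                            | None => x
                            | Some y => Order.max x y end))
        None (enum_fset (msupp v)).

Definition vlt (u v : vec) : Prop :=
  match ltm u, ltm v with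
  | None, Some _ => True
  | Some a, Some b => (a < b)%O
  | _, _ => False
  end.

Definition vle (u v : vec) : Prop := vlt u v \/ u = v.

Definition is_redop (T : {linear vec -> vec}) : Prop :=
  (forall v, T (T v) = T v) /\ (forall g : G, vle (T << g >>) << g >>).

Definition nf (T : {linear vec -> vec}) (g : G) : Prop := T << g >> = << g >>.
Definition red (T : {linear vec -> vec}) (g : G) : Prop := ~ nf T g.

Definition kerinv (V : vec -> Prop) : {linear vec -> vec} :=
  epsilon (inhabits (idfun : {linear vec -> vec}))
    (fun T => is_redop T /\ forall v, T v = 0 <-> V v).

Definition sumker n (F : 'I_n -> {linear vec -> vec}) (v : vec) : Prop :=
  exists w : 'I_n -> vec, (forall i, F i (w i) = 0) /\ v = \sum_i w i.

Definition wedge n (F : 'I_n -> {linear vec -> vec}) : {linear vec -> vec} :=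
  kerinv (sumker F).

Definition nfF n (F : 'I_n -> {linear vec -> vec}) (g : G) : Prop :=
  forall i, nf (F i) g.

Definition obs n (F : 'I_n -> {linear vec -> vec}) (g : G) : Prop :=
  nfF F g /\ ~ nf (wedge F) g.

(* c is the coordinate family of w in ker(F) w.r.t. the basis e_{i,g}
   (g in red(T_i)): c i is a finitely supported coefficient function
   (an element of K G) supported in red(T_i), and
   w_i = sum_g c_{i,g} (g - T_i(g)). *)
Definition coords n (F : 'I_n -> {linear vec -> vec}) (w : 'I_n -> vec)
    (c : 'I_n -> vec) : Prop :=
  forall i, (forall g, g \in msupp (c i) -> red (F i) g) /\
    w i = \sum_(g <- msupp (c i)) (c i)@_g *: (<< g >> - F i << g >>).

(* e_{i,g} is in lt(syz(F)): it is the greatest basis element (for the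
   order e_{i,g} [ e_{i',g'} iff i < i' or (i = i' and g < g')) appearing
   in some nonzero element of syz(F) *)
Definition in_lt_syz n (F : 'I_n -> {linear vec -> vec}) (i : 'I_n) (g : G)
    : Prop :=
  exists (w : 'I_n -> vec) (c : 'I_n -> vec),
    (forall j, F j (w j) = 0) /\ coords F w c /\
    \sum_j w j = 0 /\ (exists j, w j != 0) /\
    (c i)@_g != 0 /\
    (forall j h, (c j)@_h != 0 -> (j < i)%N \/ (j = i /\ (h <= g)%O)).

Definition is_reduction n (F Ft : 'I_n -> {linear vec -> vec}) : Prop :=
  forall i (g : G),
    ((red (F i) g /\ in_lt_syz F i g) -> Ft i << g >> = << g >>) /\
    (~ (red (F i) g /\ in_lt_syz F i g) -> Ft i << g >> = F i << g >>).

End ReductionOperators.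

(* Main.v *)
Require Import Defs.
From HB Require Import structures.
From mathcomp Require Import all_boot all_order all_algebra.
From mathcomp Require Import finmap.
From mathcomp.multinomials Require Import monalg.
From Stdlib Require Import Classical ClassicalEpsilon FunctionalExtensionality PropExtensionality.

Set Implicit Arguments.
Unset Strict Implicit.
Unset Printing Implicit Defensive.
Import Order.TTheory GRing.Theory.
Local Open Scope ring_scope.

Section Aux.
Variables (K : fieldType) (d : Order.disp_t) (G : orderType d).
Local Notation vec := (vec K G).
Implicit Types (T : {linear vec -> vec}) (v : vec).

Lemma malgU_scale (c : K) (x : G) : << c *g x >> = c *: (<< x >> : vec).
Proof.
by apply/malgP => k; rewrite mcoeffZ !mcoeffU mulr_natr.
Qed.

Lemma lin_exp T v : T v = \sum_(x <- msupp v) v@_x *: T << x >>.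
Proof.
rewrite {1}[v]monalgE linear_sum; apply: eq_bigr => x _.
by rewrite malgU_scale linearZ.
Qed.

Lemma diff_exp T v : v - T v = \sum_(x <- msupp v) v@_x *: (<< x >> - T << x >>).
Proof.
rewrite lin_exp {1}[v]monalgE -sumrB; apply: eq_bigr => x _.
by rewrite malgU_scale scalerBr.
Qed.

Lemma span_fix T v : (forall x, x \in msupp v -> T << x >> = << x >>) -> T v = v.
Proof.
move=> H; rewrite lin_exp {3}[v]monalgE big_seq [RHS]big_seq.
by apply: eq_bigr => x /H ->; rewrite malgU_scale.
Qed.

Lemma foldr_max (s : seq G) :
  match foldr (fun x acc => Some (match acc with
                            | None => x
                            | Some y => Order.max x y end)) None s with
  | None => s = [::]
  | Some a => a \in s /\ forall x, x \in s -> (x <= a)%O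
  end.
Proof.
elim: s => [//|y s IH] /=.
move: IH; case: (foldr _ _ s) => [a [Ha Hx]|->].
  split.
    by case: (leP y a) => _; rewrite inE ?Ha ?eqxx ?orbT.
  move=> x; rewrite inE => /orP [/eqP ->|/Hx xa]; rewrite le_max ?lexx //.
  by rewrite xa orbT.
by split; [rewrite inE eqxx | move=> x; rewrite inE => /eqP ->].
Qed.

Lemma ltm_spec v :
  match ltm v with
  | None => v = 0
  | Some a => a \in msupp v /\ forall x, x \in msupp v -> (x <= a)%O
  end.
Proof.
rewrite /ltm; have := foldr_max (enum_fset (msupp v)).
case: (foldr _ _ _) => [a [Ha Hx]|Hn].
  by split => // x Hxv; apply: Hx.
apply/malgP => x; rewrite mcoeff0 mcoeff_outdom //.
by rewrite -[x \in msupp v]/(x \in enum_fset (msupp v)) Hn.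
Qed.

Lemma ltmU (g : G) : ltm (<< g >> : vec) = Some g.
Proof.
have := ltm_spec (<< g >> : vec); case: (ltm _) => [a [Ha _]|/eqP].
  by move: Ha; rewrite msuppU oner_eq0 inE => /eqP ->.
by rewrite monalgU_eq0 oner_eq0.
Qed.

Lemma redop_lt T (g : G) : is_redop T -> ~ nf T g ->
  forall x, x \in msupp (T << g >>) -> (x < g)%O.
Proof.
move=> [_ H] Hr x Hx; case: (H g) => [|E]; last by case: Hr.
rewrite /vlt ltmU; have := ltm_spec (T << g >>).
case: (ltm _) => [a [_ Ha] ag|E]; first by apply: le_lt_trans (Ha _ Hx) ag.
by move: Hx; rewrite E msupp0 inE.
Qed.

Definition pb (P : Prop) : bool := if excluded_middle_informative P then true else false.
Lemma pbP (P : Prop) : reflect P (pb P).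
Proof. by rewrite /pb; case: excluded_middle_informative => H; constructor. Qed.

Lemma seq_max (s : seq G) : s != [::] -> exists2 m, m \in s & forall x, x \in s -> (x <= m)%O.
Proof.
have := foldr_max s; case: (foldr _ _ _) => [a [Ha Hx] _|->//].
by exists a.
Qed.

Lemma D0 T v : (forall x, x \in msupp v -> nf T x) \/
  exists m, [/\ m \in msupp v, ~ nf T m & forall x, x \in msupp v -> ~ nf T x -> (x <= m)%O].
Proof.
set s := [seq x <- enum_fset (msupp v) | pb (~ nf T x)].
case: (altP (s =P [::])) => [Hs|Hs]; [left|right].
  move=> x Hx; apply: NNPP => Hn.
  have : x \in s by rewrite mem_filter Hx andbT; apply/pbP.
  by rewrite Hs.
case: (seq_max Hs) => m; rewrite mem_filter => /andP [/pbP Hm Hm2] Hmax.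
exists m; split => // x Hx Hn; apply: Hmax; rewrite mem_filter Hx andbT.
by apply/pbP.
Qed.

Definition decomp T v := exists k, T k = 0 /\ forall x, x \in msupp (v - k) -> nf T x.

Lemma decomp_all T (wfG : well_founded (fun x y : G => (x < y)%O)) :
  is_redop T -> forall v, decomp T v.
Proof.
move=> HT.
have Q : forall h v, (forall x, x \in msupp v -> ~ nf T x -> (x <= h)%O) -> decomp T v.
  elim/(well_founded_ind wfG) => h IH v Hv.
  pose c := if pb (~ nf T h) then v@_h else 0.
  pose v' := v - c *: (<< h >> - T << h >>).
  have Tk : T (c *: (<< h >> - T << h >>)) = 0.
    by rewrite linearZ linearB /= HT.1 subrr scaler0.
  have Hv' : forall x, x \in msupp v' -> ~ nf T x -> (x < h)%O.
    move=> x; rewrite -mcoeff_neq0 /v' mcoeffB mcoeffZ mcoeffB => Hx Hn.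
    have [Hxh|Hxh] := eqVneq x h.
      subst x; move: Hx; rewrite /c; case: pbP => // _.
      rewrite mcoeffUU (mcoeff_outdom (g := T << h >>)).
        by rewrite subr0 mulr1 subrr eqxx.
      by apply/negP => /(redop_lt HT Hn); rewrite ltxx.
    case: (boolP (x \in msupp (T << h >>))) => [Hxt|Hxt].
      have Hnh : ~ nf T h.
        by move=> E; move: Hxt; rewrite E msuppU oner_eq0 inE (negbTE Hxh).
      exact: (redop_lt HT Hnh Hxt).
    rewrite lt_neqAle Hxh /=; apply: Hv => //.
    move: Hx; rewrite mcoeffU (eq_sym h x) (negbTE Hxh) mulr0n (mcoeff_outdom Hxt).
    by rewrite subrr mulr0 subr0 mcoeff_neq0.
  have [H0|[m [Hm Hmn Hmax]]] := D0 T v'.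
    exists (c *: (<< h >> - T << h >>)); split => //.
  have [k [Tk' Hk]] := IH m (Hv' m Hm Hmn) v' Hmax.
  exists (k + c *: (<< h >> - T << h >>)); split.
    by rewrite linearD /= Tk' Tk addr0.
  by move=> x; rewrite opprD addrA addrAC -/v'; apply: Hk.
move=> v; have [H0|[m [Hm Hmn Hmax]]] := D0 T v.
  by exists 0; split; [rewrite linear0 | move=> x; rewrite subr0; apply: H0].
exact: Q Hmax.
Qed.

Lemma fix_nf T (wfG : well_founded (fun x y : G => (x < y)%O)) v :
  is_redop T -> T v = v -> forall x, x \in msupp v -> nf T x.
Proof.
move=> HT Hv; have [k [Tk Hk]] := decomp_all wfG HT v.
have E : T (v - k) = v - k by apply: span_fix => x /Hk.
move: E; rewrite linearB /= Tk subr0 Hv => /eqP.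
rewrite -subr_eq0 opprB addrC subrK => /eqP Ek.
by move: Hk; rewrite Ek subr0.
Qed.

Section Sum.
Variables (n : nat) (F : 'I_n -> {linear vec -> vec}).

Lemma sk0 : sumker F 0.
Proof. by exists (fun _ => 0); split => [i|]; rewrite ?linear0 ?big1. Qed.

Lemma skD u v : sumker F u -> sumker F v -> sumker F (u + v).
Proof.
move=> [w1 [H1 ->]] [w2 [H2 ->]]; exists (fun i => w1 i + w2 i); split.
  by move=> i; rewrite linearD /= H1 H2 addr0.
by rewrite big_split.
Qed.

Lemma skZ c u : sumker F u -> sumker F (c *: u).
Proof.
move=> [w [H ->]]; exists (fun i => c *: w i); split.
  by move=> i; rewrite linearZ /= H scaler0.
by rewrite scaler_sumr.
Qed.

Lemma skN u : sumker F u -> sumker F (- u).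
Proof. by move=> H; rewrite -scaleN1r; apply: skZ. Qed.

Lemma skK j u : F j u = 0 -> sumker F u.
Proof.
move=> H; exists (fun i => if i == j then u else 0); split.
  by move=> i; case: eqP => [->|_]; rewrite ?linear0.
by rewrite (bigD1 j) //= eqxx big1 ?addr0 // => i /negbTE ->.
Qed.

Lemma skSum (I : Type) (r : seq I) (P : pred I) (f : I -> vec) :
  (forall i, P i -> sumker F (f i)) -> sumker F (\sum_(i <- r | P i) f i).
Proof. by move=> H; apply: big_ind => //; [exact: sk0 | exact: skD]. Qed.
End Sum.

Section Main.
Variables (wfG : well_founded (fun x y : G => (x < y)%O))
  (n : nat) (F Ft : 'I_n -> {linear vec -> vec})
  (HF : forall i, is_redop (F i)) (HFt : is_reduction F Ft).

Lemma Ft_fix i v : F i v = v -> Ft i v = v.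
Proof.
move=> Hv; apply: span_fix => x Hx.
have Hn := fix_nf wfG (HF i) Hv Hx.
by have [_ ->] := HFt i x; [exact: Hn | case].
Qed.

Lemma main_e : forall (i : 'I_n) g, sumker Ft (<< g >> - F i << g >>).
Proof.
suff H : forall m (i : 'I_n), val i = m -> forall g, sumker Ft (<< g >> - F i << g >>).
  by move=> i; apply: (H _ i).
elim/ltn_ind => m IHm i Him; subst m.
elim/(well_founded_ind wfG) => g IHg.
have [Hnf|Hred] := classic (nf (F i) g).
  by rewrite Hnf subrr; apply: sk0.
have [Hsyz|Hnsyz] := classic (in_lt_syz F i g); last first.
  apply: (skK (j := i)); rewrite linearB /=.
  have [_ ->] := HFt i g; last by case.
  by rewrite Ft_fix ?subrr // (HF i).1.
case: Hsyz => w [c [Hw [Hc [Hsum [_ [Hcig Hmax]]]]]].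
set t := (c i)@_g *: (<< g >> - F i << g >>).
have Hj : forall j, j != i -> sumker Ft (w j).
  move=> j Hji; rewrite (Hc j).2; apply: skSum => h _.
  case: (boolP (h \in msupp (c j))) => [Hh|Hh]; last first.
    by rewrite (mcoeff_outdom Hh) scale0r; apply: sk0.
  apply: skZ; rewrite -mcoeff_neq0 in Hh.
  case: (Hmax j h Hh) => [Hlt|[E _]]; last by rewrite E eqxx in Hji.
  exact: IHm Hlt j erefl h.
have Hi : sumker Ft (w i - t).
  have Hg : g \in msupp (c i) by rewrite -mcoeff_neq0.
  rewrite (Hc i).2 (bigD1_seq g Hg (fset_uniq _)) /=; rewrite -/t addrC addrK; apply: skSum => h Hhg.
  case: (boolP (h \in msupp (c i))) => [Hh|Hh]; last first.
    by rewrite (mcoeff_outdom Hh) scale0r; apply: sk0.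
  apply: skZ; rewrite -mcoeff_neq0 in Hh.
  case: (Hmax i h Hh) => [|[_ Hhg']]; first by rewrite ltnn.
  by apply: IHg; rewrite lt_neqAle Hhg Hhg'.
have Ht : sumker Ft t.
  have E : t = - (\sum_(j | j != i) w j) - (w i - t).
    move: Hsum; rewrite (bigD1 i) //= => /eqP; rewrite addr_eq0 => /eqP ->.
    by rewrite opprB addrCA subrr addr0.
  rewrite E; apply: skD; first exact/skN/skSum.
  exact/skN.
have -> : << g >> - F i << g >> = ((c i)@_g)^-1 *: t.
  by rewrite /t scalerA mulVf // scale1r.
exact: skZ.
Qed.

Lemma sumker_eq : sumker Ft = sumker F.
Proof.
apply: functional_extensionality => v; apply: propositional_extensionality.
split => [[w [Hw ->]]|[w [Hw ->]]].
  exists w; split => // i.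
  have -> : w i = w i - Ft i (w i) by rewrite Hw subr0.
  rewrite diff_exp linear_sum big1 // => x _.
  rewrite linearZ linearB /=; have [H1 H2] := HFt i x.
  have [Hc|Hc] := classic (~ nf (F i) x /\ in_lt_syz F i x).
    by rewrite H1 // subrr; exact: scaler0.
  by rewrite (H2 Hc) (HF i).1 subrr; exact: scaler0.
apply: skSum => i _.
have -> : w i = w i - F i (w i) by rewrite Hw subr0.
rewrite diff_exp; apply: skSum => x _; apply: skZ; exact: main_e.
Qed.

End Main.

End Aux.

Theorem mainTheorem7 (K : fieldType) (d : Order.disp_t) (G : orderType d)
    (wfG : well_founded (fun x y : G => (x < y)%O))
    (n : nat) (F Ft : 'I_n -> {linear vec K G -> vec K G})
    (HF : forall i, is_redop (F i))
    (HFt : is_reduction F Ft) :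
  wedge Ft = wedge F /\ (forall g : G, obs F g -> obs Ft g).
Proof.
have Hw : wedge Ft = wedge F by rewrite /wedge (sumker_eq wfG HF HFt).
split => // g [Hnf Hw']; split; last by rewrite Hw.
move=> i; rewrite /nf; have [_ ->] := HFt i g; first exact: Hnf.
by case=> H; case: H; apply: Hnf.
Qed.
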